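(* Let $(X,d)$ be a metric space with a II-modulus of total boundedness $\gamma$, and let $(x_n),(y_n)$ be sequences in $X$. Define recursively $n_0:=0$ and $$n_{k+1}:=\left\lceil \max_{i,j\le k}\{n_k,\ d(x_{n_i},y_{n_j}),\ d(x_{n_i},x_{n_j}),\ d(y_{n_i},y_{n_j})\}+3\right\rceil .$$ Then there exists $N\le n_{\gamma(0)}$ with $d(x_N,y_N)<N$.
   Context: $\mathbb{N}$ includes $0$. A map $\gamma:\mathbb{N}\to\mathbb{N}$ is a II-modulus of total boundedness for $X$ if for every $k\in\mathbb{N}$ and every sequence $(z_n)$ in $X$ there exist $0\le i<j\le\gamma(k)$ with $d(z_i,z_j)\le\frac1{k+1}$. *)

(* Defs.v *)
From Stdlib Require Import Reals List.
Import ListNotations.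
Open Scope R_scope.

Definition is_metric {X : Type} (d : X -> X -> R) : Prop :=
  (forall a b, 0 <= d a b) /\
  (forall a b, d a b = 0 <-> a = b) /\
  (forall a b, d a b = d b a) /\
  (forall a b c, d a c <= d a b + d b c).

Definition II_modulus {X : Type} (d : X -> X -> R) (gamma : nat -> nat) : Prop :=
  forall (k : nat) (z : nat -> X),
    exists i j : nat, (i < j)%nat /\ (j <= gamma k)%nat /\
      d (z i) (z j) <= 1 / INR (k + 1).

Definition Rceil (r : R) : Z := (- Int_part (- r))%Z.

Section Seq.
Context {X : Type} (d : X -> X -> R) (x y : nat -> X).

(* max over i,j in l of {last l, d(x_i,y_j), d(x_i,x_j), d(y_i,y_j)} *)
Definition maxval (l : list nat) : R :=
  fold_right (fun a acc =>
    fold_right (fun b acc' =>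
      Rmax acc' (Rmax (d (x a) (y b)) (Rmax (d (x a) (x b)) (d (y a) (y b)))))
      acc l)
    (INR (last l 0%nat)) l.

(* n_{k+1} from the list [n_0; ...; n_k] *)
Definition next_n (l : list nat) : nat := Z.to_nat (Rceil (maxval l + 3)).

Fixpoint nlist (k : nat) : list nat :=
  match k with
  | O => [0%nat]
  | S k' => nlist k' ++ [next_n (nlist k')]
  end.

Definition n_seq (k : nat) : nat := last (nlist k) 0%nat.
End Seq.

(* Main.v *)
Require Import Defs.
From Stdlib Require Import Reals.
From Stdlib Require Import ZArith Lra Lia List ClassicalEpsilon Classical.
Import ListNotations.
Open Scope R_scope.

Section H.
Context {X : Type} (d : X -> X -> R) (x y : nat -> X).

Let T a b := Rmax (d (x a) (y b)) (Rmax (d (x a) (x b)) (d (y a) (y b))).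

Lemma inner_ge a acc l2 :
  acc <= fold_right (fun b acc' =>
      Rmax acc' (Rmax (d (x a) (y b)) (Rmax (d (x a) (x b)) (d (y a) (y b))))) acc l2 /\
  forall b, In b l2 -> T a b <= fold_right (fun b acc' =>
      Rmax acc' (Rmax (d (x a) (y b)) (Rmax (d (x a) (x b)) (d (y a) (y b))))) acc l2.
Proof.
  induction l2 as [|b0 l IH]; simpl.
  - split; [lra| tauto].
  - destruct IH as [IH1 IH2]. split.
    + eapply Rle_trans; [exact IH1| apply Rmax_l].
    + intros b [<-|Hb].
      * apply Rmax_r.
      * eapply Rle_trans; [exact (IH2 b Hb)| apply Rmax_l].
Qed.

Lemma outer_ge acc l1 l2 :
  let o := fold_right (fun a acc =>
    fold_right (fun b acc' =>
      Rmax acc' (Rmax (d (x a) (y b)) (Rmax (d (x a) (x b)) (d (y a) (y b)))))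
      acc l2) acc l1 in
  acc <= o /\ forall a b, In a l1 -> In b l2 -> T a b <= o.
Proof.
  induction l1 as [|a0 l IH]; simpl.
  - split; [lra| tauto].
  - destruct IH as [IH1 IH2].
    destruct (inner_ge a0 (fold_right (fun a acc =>
    fold_right (fun b acc' =>
      Rmax acc' (Rmax (d (x a) (y b)) (Rmax (d (x a) (x b)) (d (y a) (y b)))))
      acc l2) acc l) l2) as [J1 J2].
    split.
    + lra.
    + intros a b [<-|Ha] Hb.
      * apply J2; auto.
      * eapply Rle_trans; [apply IH2; auto| exact J1].
Qed.

Lemma maxval_last l : INR (last l 0%nat) <= maxval d x y l.
Proof. unfold maxval. apply (outer_ge _ l l). Qed.

Lemma maxval_T l a b : In a l -> In b l -> T a b <= maxval d x y l.
Proof. intros. unfold maxval. apply (outer_ge _ l l); auto. Qed.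

Lemma maxval_pt (Hsym : forall a b, d a b = d b a) l a b p q :
  In a l -> In b l -> (p = x a \/ p = y a) -> (q = x b \/ q = y b) ->
  d p q <= maxval d x y l.
Proof.
  intros Ha Hb Hp Hq.
  pose proof (maxval_T l a b Ha Hb) as H1.
  pose proof (maxval_T l b a Hb Ha) as H2.
  unfold T in H1, H2.
  destruct Hp as [->| ->]; destruct Hq as [->| ->].
  - pose proof (Rmax_l (d (x a) (x b)) (d (y a) (y b))).
    pose proof (Rmax_r (d (x a) (y b)) (Rmax (d (x a) (x b)) (d (y a) (y b)))). lra.
  - pose proof (Rmax_l (d (x a) (y b)) (Rmax (d (x a) (x b)) (d (y a) (y b)))). lra.
  - rewrite Hsym.
    pose proof (Rmax_l (d (x b) (y a)) (Rmax (d (x b) (x a)) (d (y b) (y a)))). lra.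
  - pose proof (Rmax_r (d (x a) (x b)) (d (y a) (y b))).
    pose proof (Rmax_r (d (x a) (y b)) (Rmax (d (x a) (x b)) (d (y a) (y b)))). lra.
Qed.

Lemma next_ge l : maxval d x y l + 3 <= INR (next_n d x y l).
Proof.
  unfold next_n, Rceil.
  set (r := maxval d x y l + 3).
  assert (Hr : 3 <= r) by (pose proof (maxval_last l); pose proof (pos_INR (last l 0%nat)); unfold r; lra).
  destruct (base_Int_part (- r)) as [H1 H2].
  set (z := Int_part (- r)) in *.
  assert (Hz : (0 <= - z)%Z).
  { apply le_IZR. rewrite opp_IZR. simpl. lra. }
  rewrite INR_IZR_INZ, Z2Nat.id by exact Hz.
  rewrite opp_IZR. lra.
Qed.

Lemma n_S k : n_seq d x y (S k) = next_n d x y (nlist d x y k).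
Proof. unfold n_seq. simpl. apply last_last. Qed.

Lemma in_nlist k a : In a (nlist d x y k) <-> exists i, (i <= k)%nat /\ a = n_seq d x y i.
Proof.
  induction k as [|k IH].
  - simpl. split.
    + intros [<-|[]]. exists 0%nat. split; [lia| reflexivity].
    + intros [i [Hi ->]]. assert (i = 0%nat) by lia. subst. left; reflexivity.
  - simpl. rewrite in_app_iff, IH. split.
    + intros [[i [Hi ->]]|[<-|[]]].
      * exists i. split; [lia|auto].
      * exists (S k). split; [lia| symmetry; apply n_S].
    + intros [i [Hi ->]]. destruct (Nat.eq_dec i (S k)) as [->|Hne].
      * right; left. symmetry; apply n_S.
      * left. exists i. split; [lia|auto].
Qed.

Lemma n_step k : INR (n_seq d x y k) + 3 <= INR (n_seq d x y (S k)).
Proof.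
  rewrite n_S. pose proof (next_ge (nlist d x y k)).
  pose proof (maxval_last (nlist d x y k)). unfold n_seq at 1. lra.
Qed.

Lemma n_mono i k : (i <= k)%nat -> (n_seq d x y i <= n_seq d x y k)%nat.
Proof.
  induction 1. lia.
  assert (n_seq d x y m <= n_seq d x y (S m))%nat.
  { apply INR_le. pose proof (n_step m). lra. }
  lia.
Qed.

End H.

Theorem proposition2p5 (X : Type) (d : X -> X -> R) (gamma : nat -> nat)
  (x y : nat -> X) :
  is_metric d -> II_modulus d gamma ->
  exists N : nat, (N <= n_seq d x y (gamma 0%nat))%nat /\ d (x N) (y N) < INR N.
Proof.
  intros [Hpos [Hid [Hsym Htri]]] Hmod.
  apply NNPP. intro Hno.
  assert (Hall : forall N, (N <= n_seq d x y (gamma 0%nat))%nat -> INR N <= d (x N) (y N)).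
  { intros N HN. apply Rnot_lt_le. intro Hl. apply Hno. exists N. auto. }
  set (n := n_seq d x y).
  set (P := fun k => forall i, (i < k)%nat ->
              1 < d (x (n k)) (x (n i)) /\ 1 < d (x (n k)) (y (n i))).
  set (w := fun k => if excluded_middle_informative (P k) then x (n k) else y (n k)).
  assert (Hw : forall k, w k = x (n k) \/ w k = y (n k)).
  { intro k. unfold w. destruct excluded_middle_informative; auto. }
  assert (Key : forall j i, (j <= gamma 0%nat)%nat -> (i < j)%nat -> 1 < d (w j) (w i)).
  { intros j i Hj Hij.
    unfold w at 1. destruct excluded_middle_informative as [Hp|Hp].
    - destruct (Hp i Hij). destruct (Hw i) as [-> | ->]; auto.
    - destruct j as [|j']; [lia|].
      assert (Hd : INR (n (S j')) <= d (x (n (S j'))) (y (n (S j')))).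
      { apply Hall. apply n_mono. exact Hj. }
      assert (Hn : maxval d x y (nlist d x y j') + 3 <= INR (n (S j'))).
      { unfold n. rewrite n_S. apply next_ge. }
      assert (Hin : forall i0, (i0 < S j')%nat -> In (n i0) (nlist d x y j')).
      { intros i0 Hi0. apply in_nlist. exists i0. split; [lia|reflexivity]. }
      unfold P in Hp.
      apply not_all_ex_not in Hp. destruct Hp as [i0 Hp].
      apply imply_to_and in Hp. destruct Hp as [Hi0 Hp].
      assert (Hs : exists s, (s = x (n i0) \/ s = y (n i0)) /\ d (x (n (S j'))) s <= 1).
      { destruct (Rle_dec (d (x (n (S j'))) (x (n i0))) 1).
        - exists (x (n i0)). auto.
        - exists (y (n i0)). split; auto. apply Rnot_lt_le. intro. apply Hp. split; lra. }
      destruct Hs as [s [Hs1 Hs2]].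
      apply Rnot_le_lt. intro Hle.
      assert (Hb : d (x (n (S j'))) (y (n (S j'))) <= 1 + maxval d x y (nlist d x y j') + 1).
      { pose proof (maxval_pt d x y Hsym (nlist d x y j') (n i0) (n i) s (w i)
           (Hin i0 Hi0) (Hin i Hij) Hs1 (Hw i)).
        pose proof (Htri (x (n (S j'))) s (y (n (S j')))).
        pose proof (Htri s (w i) (y (n (S j')))).
        pose proof (Hsym (y (n (S j'))) (w i)). lra. }
      lra. }
  destruct (Hmod 0%nat w) as [i [j [Hij [Hj Hle]]]].
  pose proof (Key j i Hj Hij). replace (1 / INR (0 + 1)) with 1 in Hle by (simpl; field).
  rewrite Hsym in Hle. lra.
Qed.
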